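(* Let $k\ge 0$ be an integer. Let $G_k$ be the tree with vertex set $\{r,s\}\cup\bigcup_{i=1}^k\{y^{(i)},x^{(i)},w^{(i)},v^{(i)},u^{(i)}\}$ and edge set $\{rs\}\cup\bigcup_{i=1}^k\{sy^{(i)},\,y^{(i)}x^{(i)},\,x^{(i)}w^{(i)},\,w^{(i)}v^{(i)},\,v^{(i)}u^{(i)}\}$ (so $s$ carries a pendant vertex $r$ and $k$ pendant paths on $5$ vertices). Let $H_k$ be obtained from $G_k$ by adding three new vertices $u,v,w$ and edges $uv,vw,ws$. Then $\gamma(G_k)=2k+1$ and $\Gamma(G_k)=5^k+3^k$, while $\gamma(H_k)=2k+2$ and $\Gamma(H_k)=2\cdot 5^k+3^k$.
   Context: For a graph $G$, a set $D\subseteq V(G)$ is dominating if every vertex of $G$ lies in $D$ or has a neighbour in $D$. The domination number $\gamma(G)$ is the minimum size of a dominating set; $\Gamma(G)$ denotes the number of dominating sets of $G$ of size $\gamma(G)$. *)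

(* Defs.v *)
From mathcomp Require Import all_boot.
Set Implicit Arguments. Unset Strict Implicit. Unset Printing Implicit Defensive.

Section Dom.
Variables (T : finType) (e : rel T).

Definition dominating (D : {set T}) : bool :=
  [forall x, (x \in D) || [exists y in D, e x y]].

(* domination number: minimum size of a dominating set (setT dominates,
   so the initial value #|T| is harmless) *)
Definition domination_number : nat :=
  \big[minn/#|T|]_(D : {set T} | dominating D) #|D|.

Definition num_min_dominating : nat :=
  #|[set D : {set T} | dominating D & #|D| == domination_number]|.
End Dom.

Definition sym_rel (T : Type) (f : T -> T -> bool) : rel T :=
  fun x y => f x y || f y x.

(* Vertices of G_k: inl 0 = r, inl 1 = s, inr (i, j) with
   j = 0,1,2,3,4 standing for y^(i), x^(i), w^(i), v^(i), u^(i). *)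
Definition GV (k : nat) : finType := ('I_2 + ('I_k * 'I_5))%type.

Definition G_edge0 (k : nat) (a b : GV k) : bool :=
  match a, b with
  | inl p, inl q => (val p == 0) && (val q == 1)
  | inl p, inr (i, j) => (val p == 1) && (val j == 0)
  | inr (i, j), inr (i', j') => (i == i') && (val j' == (val j).+1)
  | _, _ => false
  end.

Arguments G_edge0 : clear implicits.
Definition G_edge (k : nat) : rel (GV k) := sym_rel (G_edge0 k).

(* Vertices of H_k: inl a = vertex a of G_k, inr 0 = u, inr 1 = v, inr 2 = w. *)
Definition HV (k : nat) : finType := (GV k + 'I_3)%type.

Definition H_edge0 (k : nat) (a b : HV k) : bool :=
  match a, b with
  | inl a', inl b' => G_edge0 k a' b'
  | inr p, inr q => val q == (val p).+1
  | inr p, inl (inl q) => (val p == 2) && (val q == 1)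
  | _, _ => false
  end.

Arguments H_edge0 : clear implicits.
Definition H_edge (k : nat) : rel (HV k) := sym_rel (H_edge0 k).
Arguments G_edge : clear implicits.
Arguments H_edge : clear implicits.

(* Main.v *)
Require Import Defs.
From mathcomp Require Import all_boot zify.
Set Implicit Arguments. Unset Strict Implicit. Unset Printing Implicit Defensive.

Notation o2 n := (@Ordinal 2 n isT).
Notation o3 n := (@Ordinal 3 n isT).
Notation o5 n := (@Ordinal 5 n isT).

Lemma inr_eq (A B : eqType) (a b : B) : (@inr A B a == inr b) = (a == b).
Proof. by apply/eqP/eqP => [[]|->]. Qed.
Lemma inl_eq (A B : eqType) (a b : A) : (@inl A B a == inl b) = (a == b).
Proof. by apply/eqP/eqP => [[]|->]. Qed.
Lemma inlr_eq (A B : eqType) (a : A) (b : B) : (inl a == inr b) = false.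
Proof. by []. Qed.
Lemma inrl_eq (A B : eqType) (a : A) (b : B) : (inr b == inl a) = false.
Proof. by []. Qed.
Lemma ordE n a b (Ha : a < n) (Hb : b < n) : (Ordinal Ha == Ordinal Hb) = (a == b).
Proof. by []. Qed.

Lemma mem_s_map k (T : finType) (q : T) :
  (@inl T _ q \in [seq inr (i, o5 0) | i <- enum 'I_k]) = false.
Proof. by apply/mapP => [[]]. Qed.
Lemma mem_s_mapr k (T : finType) i (j : 'I_5) :
  (@inr T _ (i, j) \in [seq inr (i, o5 0) | i <- enum 'I_k]) = (val j == 0).
Proof.
apply/mapP/idP => [[x _ [_ ->]] //|/eqP Hj].
exists i; first by rewrite mem_enum.
by congr (inr (_, _)); apply: val_inj.
Qed.

Definition nbrsG k (x : GV k) : seq (GV k) :=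
  match x with
  | inl p => if val p == 0 then [:: inl (o2 1)]
             else inl (o2 0) :: [seq inr (i, o5 0) | i <- enum 'I_k]
  | inr (i, j) => match val j with
     | 0 => [:: inl (o2 1); inr (i, o5 1)]
     | 1 => [:: inr (i, o5 0); inr (i, o5 2)]
     | 2 => [:: inr (i, o5 1); inr (i, o5 3)]
     | 3 => [:: inr (i, o5 2); inr (i, o5 4)]
     | _ => [:: inr (i, o5 3)] end
  end.

Lemma nbrsG_spec k (x y : GV k) : G_edge k x y = (y \in nbrsG x).
Proof.
case: x => [[[|[|p]] Hp]|[i [[|[|[|[|[|j]]]]] Hj]]] //;
case: y => [[[|[|q]] Hq]|[i' [[|[|[|[|[|j']]]]] Hj']]] //=.
all: rewrite /G_edge /sym_rel /= ?inE ?mem_s_map ?mem_s_mapr //=.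
all: rewrite ?inr_eq ?inl_eq ?inlr_eq ?inrl_eq ?xpair_eqE ?ordE /= ?andbT ?andbF ?orbF //.
all: by rewrite eq_sym.
Qed.

Lemma dom_nbrs (T : finType) (e : rel T) (nb : T -> seq T)
  (Hnb : forall x y, e x y = (y \in nb x)) D :
  dominating e D = [forall x, (x \in D) || has (mem D) (nb x)].
Proof.
apply: eq_forallb => x; congr (_ || _).
apply/existsP/hasP => [[y /andP[yD]]|[y yn yD]]; first by rewrite Hnb; exists y.
by exists y; rewrite -Hnb in yn; rewrite yn andbT.
Qed.

Lemma forall_sum (A B : finType) (P : pred (A + B)) :
  [forall x, P x] = [forall a, P (inl a)] && [forall b, P (inr b)].
Proof.
apply/forallP/andP => [H|[/forallP H1 /forallP H2]]; first by split; apply/forallP.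
by case.
Qed.
Lemma forall_pair (A B : finType) (P : pred (A * B)) :
  [forall x, P x] = [forall a, [forall b, P (a, b)]].
Proof.
apply/forallP/forallP => [H a|H [a b]]; first by apply/forallP.
exact: (forallP (H a)).
Qed.
Lemma forall_I2 (P : pred 'I_2) : [forall j, P j] = P (o2 0) && P (o2 1).
Proof.
apply/forallP/andP => [H|[H0 H1]]; first by split.
case=> [[|[|j]] Hj] //.
- by rewrite (_ : Ordinal Hj = o2 0) //; apply: val_inj.
- by rewrite (_ : Ordinal Hj = o2 1) //; apply: val_inj.
Qed.
Lemma forall_I3 (P : pred 'I_3) : [forall j, P j] = [&& P (o3 0), P (o3 1) & P (o3 2)].
Proof.
apply/forallP/and3P => [H|[H0 H1 H2]]; first by split.
case=> [[|[|[|j]]] Hj] //.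
- by rewrite (_ : Ordinal Hj = o3 0) //; apply: val_inj.
- by rewrite (_ : Ordinal Hj = o3 1) //; apply: val_inj.
- by rewrite (_ : Ordinal Hj = o3 2) //; apply: val_inj.
Qed.
Lemma forall_I5 (P : pred 'I_5) :
  [forall j, P j] = [&& P (o5 0), P (o5 1), P (o5 2), P (o5 3) & P (o5 4)].
Proof.
apply/forallP/and5P => [H|[H0 H1 H2 H3 H4]]; first by split.
case=> [[|[|[|[|[|j]]]]] Hj] //.
- by rewrite (_ : Ordinal Hj = o5 0) //; apply: val_inj.
- by rewrite (_ : Ordinal Hj = o5 1) //; apply: val_inj.
- by rewrite (_ : Ordinal Hj = o5 2) //; apply: val_inj.
- by rewrite (_ : Ordinal Hj = o5 3) //; apply: val_inj.
- by rewrite (_ : Ordinal Hj = o5 4) //; apply: val_inj.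
Qed.
Lemma has_enum (T : finType) (P : pred T) : has P (enum T) = [exists x, P x].
Proof.
apply/hasP/existsP => [[x _ Px]|[x Px]]; first by exists x.
by exists x; rewrite ?mem_enum.
Qed.

Definition locG5 (b b0 b1 b2 b3 b4 : bool) :=
  [&& b0 || b1 || b, b0 || b1 || b2, b1 || b2 || b3, b2 || b3 || b4 & b3 || b4].

Lemma domG k (D : {set GV k}) : dominating (G_edge k) D =
  [&& (inl (o2 0) \in D) || (inl (o2 1) \in D),
      (inl (o2 1) \in D) || (inl (o2 0) \in D) || [exists i, inr (i, o5 0) \in D] &
      [forall i, locG5 (inl (o2 1) \in D) (inr (i, o5 0) \in D) (inr (i, o5 1) \in D)
          (inr (i, o5 2) \in D) (inr (i, o5 3) \in D) (inr (i, o5 4) \in D)]].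
Proof.
rewrite (dom_nbrs (@nbrsG_spec k)) forall_sum forall_I2 forall_pair /=.
rewrite has_map has_enum !orbF -andbA; congr [&& _, _ & _].
  by rewrite orbA.
apply: eq_forallb => i; rewrite forall_I5 /= /locG5 !orbF.
by case: (inl (o2 1) \in D); case: (inr (i, o5 0) \in D); case: (inr (i, o5 1) \in D);
  case: (inr (i, o5 2) \in D); case: (inr (i, o5 3) \in D); case: (inr (i, o5 4) \in D).
Qed.

Lemma sum5 (F : 'I_5 -> nat) : \sum_(j < 5) F j = F (o5 0) + F (o5 1) + F (o5 2) + F (o5 3) + F (o5 4).
Proof.
rewrite !big_ord_recl big_ord0 addn0 !addnA.
by repeat congr (_ + _); congr F; apply: val_inj.
Qed.
Lemma sum2 (F : 'I_2 -> nat) : \sum_(j < 2) F j = F (o2 0) + F (o2 1).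
Proof. rewrite !big_ord_recl big_ord0 addn0; by repeat congr (_ + _); congr F; apply: val_inj. Qed.
Lemma sum3 (F : 'I_3 -> nat) : \sum_(j < 3) F j = F (o3 0) + F (o3 1) + F (o3 2).
Proof. rewrite !big_ord_recl big_ord0 addn0 !addnA; by repeat congr (_ + _); congr F; apply: val_inj. Qed.

Lemma card_sumb (T : finType) (D : {set T}) : #|D| = \sum_(x : T) (x \in D).
Proof. by rewrite -sum1_card big_mkcond. Qed.

Lemma sum_pairb (A B : finType) (F : A * B -> nat) :
  \sum_(p : A * B) F p = \sum_(a : A) \sum_(b : B) F (a, b).
Proof. by rewrite pair_big; apply: eq_bigr => [[]]. Qed.

Lemma cardG k (D : {set GV k}) : #|D| = (inl (o2 0) \in D) + (inl (o2 1) \in D) +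
  \sum_(i < k) ((inr (i, o5 0) \in D) + (inr (i, o5 1) \in D) + (inr (i, o5 2) \in D)
                + (inr (i, o5 3) \in D) + (inr (i, o5 4) \in D)).
Proof.
rewrite card_sumb big_sumType /= sum2 sum_pairb; congr (_ + _).
by apply: eq_bigr => i _; rewrite sum5.
Qed.

Lemma sum_ge2 k (g : 'I_k -> nat) : (forall i, 2 <= g i) -> 2 * k <= \sum_i g i.
Proof.
move=> H; apply: (@leq_trans (\sum_(i < k) 2)).
  by rewrite sum_nat_const card_ord mulnC.
by apply: leq_sum => i _.
Qed.
Lemma sum_eq2 k (g : 'I_k -> nat) : (forall i, 2 <= g i) -> \sum_i g i <= 2 * k ->
  forall i, g i = 2.
Proof.
move=> H Hs.
have E : \sum_i g i = \sum_i (g i - 2) + 2 * k.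
  rewrite (_ : 2 * k = \sum_(i < k) 2); last by rewrite sum_nat_const card_ord mulnC.
  by rewrite -big_split; apply: eq_bigr => i _; move: (H i) => Hi /=; rewrite subnK.
have /eqP: \sum_i (g i - 2) == 0 by move: Hs; rewrite E; lia.
move/eqP; rewrite sum_nat_eq0 => /forallP Z i.
by move: (Z i) (H i); rewrite subn_eq0; lia.
Qed.

Lemma ord2_cases (j : 'I_2) : j = o2 0 \/ j = o2 1.
Proof. case: j => [[|[|j]] Hj] //; [left|right]; exact: val_inj. Qed.
Lemma ord3_cases (j : 'I_3) : [\/ j = o3 0, j = o3 1 | j = o3 2].
Proof. case: j => [[|[|[|j]]] Hj] //; [apply: Or31|apply: Or32|apply: Or33]; exact: val_inj. Qed.
Lemma ord5_cases (j : 'I_5) : j = o5 0 \/ j = o5 1 \/ j = o5 2 \/ j = o5 3 \/ j = o5 4.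
Proof.
case: j => [[|[|[|[|[|j]]]]] Hj] //;
 [left|right;left|right;right;left|right;right;right;left|right;right;right;right]; exact: val_inj.
Qed.

Definition pat5n (t j : nat) : bool :=
  match t with 0 => (j == 0) || (j == 3) | 1 => (j == 1) || (j == 3)
  | 2 => (j == 2) || (j == 3) | 3 => (j == 1) || (j == 4) | _ => (j == 2) || (j == 4) end.
Definition pat3n (t j : nat) : bool :=
  match t with 0 => (j == 0) || (j == 3) | 1 => (j == 1) || (j == 3)
  | _ => (j == 1) || (j == 4) end.
Definition code5n (b0 b1 b2 b3 b4 : bool) : nat :=
  if b3 then (if b0 then 0 else if b1 then 1 else 2) else (if b1 then 3 else 4).
Definition code3n (b0 b1 b2 b3 b4 : bool) : nat :=
  if b3 then (if b0 then 0 else 1) else 2.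

Lemma loc_ge2 b b0 b1 b2 b3 b4 : locG5 b b0 b1 b2 b3 b4 -> 2 <= b0 + b1 + b2 + b3 + b4.
Proof. by case: b; case: b0; case: b1; case: b2; case: b3; case: b4. Qed.
Lemma loc5 b0 b1 b2 b3 b4 : locG5 true b0 b1 b2 b3 b4 -> b0 + b1 + b2 + b3 + b4 = 2 ->
  let c := code5n b0 b1 b2 b3 b4 in
  [/\ b0 = pat5n c 0, b1 = pat5n c 1, b2 = pat5n c 2, b3 = pat5n c 3 & b4 = pat5n c 4].
Proof. by case: b0; case: b1; case: b2; case: b3; case: b4. Qed.
Lemma loc3 b0 b1 b2 b3 b4 : locG5 false b0 b1 b2 b3 b4 -> b0 + b1 + b2 + b3 + b4 = 2 ->
  let c := code3n b0 b1 b2 b3 b4 in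
  [/\ b0 = pat3n c 0, b1 = pat3n c 1, b2 = pat3n c 2, b3 = pat3n c 3 & b4 = pat3n c 4].
Proof. by case: b0; case: b1; case: b2; case: b3; case: b4. Qed.
Lemma code5_lt b0 b1 b2 b3 b4 : code5n b0 b1 b2 b3 b4 < 5.
Proof. by rewrite /code5n; case: b0; case: b1; case: b3. Qed.
Lemma code3_lt b0 b1 b2 b3 b4 : code3n b0 b1 b2 b3 b4 < 3.
Proof. by rewrite /code3n; case: b0; case: b3. Qed.
Lemma pat5_ok t : t < 5 ->
  locG5 true (pat5n t 0) (pat5n t 1) (pat5n t 2) (pat5n t 3) (pat5n t 4) &&
  (pat5n t 0 + pat5n t 1 + pat5n t 2 + pat5n t 3 + pat5n t 4 == 2) &&
  (code5n (pat5n t 0) (pat5n t 1) (pat5n t 2) (pat5n t 3) (pat5n t 4) == t).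
Proof. by case: t => [|[|[|[|[|t]]]]]. Qed.
Lemma pat3_ok t : t < 3 ->
  locG5 false (pat3n t 0) (pat3n t 1) (pat3n t 2) (pat3n t 3) (pat3n t 4) &&
  (pat3n t 0 + pat3n t 1 + pat3n t 2 + pat3n t 3 + pat3n t 4 == 2) &&
  (code3n (pat3n t 0) (pat3n t 1) (pat3n t 2) (pat3n t 3) (pat3n t 4) == t).
Proof. by case: t => [|[|[|t]]]. Qed.

Lemma bigmin_le (I : eqType) (r : seq I) (P : pred I) (F : I -> nat) x0 i0 :
  i0 \in r -> P i0 -> \big[minn/x0]_(i <- r | P i) F i <= F i0.
Proof.
elim: r => //= a r IH; rewrite inE big_cons; case/orP => [/eqP<-|Hin] HP.
  by rewrite HP geq_minl.
case: (P a); last exact: IH.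
exact: leq_trans (geq_minr _ _) (IH Hin HP).
Qed.

Lemma dn_eq (T : finType) (e : rel T) m D0 : dominating e D0 -> #|D0| = m ->
  (forall D, dominating e D -> m <= #|D|) -> domination_number e = m.
Proof.
move=> HD0 Hm Hlow; apply/eqP; rewrite eqn_leq; apply/andP; split.
  by rewrite -Hm; apply: bigmin_le; rewrite ?mem_index_enum.
apply: (big_ind (fun n => m <= n)) => //.
- by rewrite -Hm max_card.
- by move=> x y Hx Hy; rewrite leq_min Hx Hy.
Qed.

Lemma nmd_eq (T : finType) (e : rel T) m : domination_number e = m ->
  num_min_dominating e = #|[set D | dominating e D & #|D| == m]|.
Proof. by rewrite /num_min_dominating => ->. Qed.

Definition buildG k (t : {ffun 'I_k -> 'I_5} + {ffun 'I_k -> 'I_3}) : {set GV k} :=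
  [set x : GV k | match x with
   | inl p => val p == (if t is inl _ then 1 else 0)
   | inr (i, j) => match t with inl f => pat5n (f i) (val j) | inr g => pat3n (g i) (val j) end end].

Definition decodeG k (D : {set GV k}) : {ffun 'I_k -> 'I_5} + {ffun 'I_k -> 'I_3} :=
  if inl (o2 1) \in D then
    inl [ffun i => inord (code5n (inr (i, o5 0) \in D) (inr (i, o5 1) \in D)
        (inr (i, o5 2) \in D) (inr (i, o5 3) \in D) (inr (i, o5 4) \in D))]
  else inr [ffun i => inord (code3n (inr (i, o5 0) \in D) (inr (i, o5 1) \in D)
        (inr (i, o5 2) \in D) (inr (i, o5 3) \in D) (inr (i, o5 4) \in D))].

Lemma decodeG_build k : cancel (@buildG k) (@decodeG k).
Proof.
case=> f; rewrite /decodeG inE /=; congr (_ _); apply/ffunP => i; rewrite ffunE !inE /=.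
  by case/andP: (pat5_ok (ltn_ord (f i))) => _ /eqP ->; rewrite inord_val.
by case/andP: (pat3_ok (ltn_ord (f i))) => _ /eqP ->; rewrite inord_val.
Qed.

Lemma buildG_ok k t : dominating (G_edge k) (buildG t) && (#|buildG t| == 2 * k + 1).
Proof.
rewrite domG cardG !inE /=.
case: t => f /=; apply/andP; split.
- by apply/forallP => i; rewrite !inE /=; case/andP: (pat5_ok (ltn_ord (f i))) => /andP[].
- rewrite (eq_bigr (fun _ => 2)); first by rewrite sum_nat_const card_ord; apply/eqP; lia.
  by move=> i _; rewrite !inE /=; case/andP: (pat5_ok (ltn_ord (f i))) => /andP[_ /eqP].
- by apply/forallP => i; rewrite !inE /=; case/andP: (pat3_ok (ltn_ord (f i))) => /andP[].
- rewrite (eq_bigr (fun _ => 2)); first by rewrite sum_nat_const card_ord; apply/eqP; lia.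
  by move=> i _; rewrite !inE /=; case/andP: (pat3_ok (ltn_ord (f i))) => /andP[_ /eqP].
Qed.

Lemma lowG k (D : {set GV k}) : dominating (G_edge k) D -> 2 * k + 1 <= #|D|.
Proof.
rewrite domG cardG => /and3P[Hrs _ /forallP Hl].
rewrite addnC leq_add //; first by move: Hrs; case: (inl (o2 0) \in D); case: (inl (o2 1) \in D).
by apply: sum_ge2 => i; exact: loc_ge2 (Hl i).
Qed.

Lemma build_decodeG k (D : {set GV k}) : dominating (G_edge k) D -> #|D| = 2 * k + 1 ->
  buildG (decodeG D) = D.
Proof.
move=> HD HC; move: (HD) HC; rewrite domG cardG => /and3P[Hrs _ /forallP Hl] HC.
set R := inl (o2 0) \in D in Hrs HC Hl *; set S := inl (o2 1) \in D in Hrs HC Hl *.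
move: HC; set sm := \sum_(i < k) _ => HC.
have Hs2 : 2 * k <= sm := @sum_ge2 k _ (fun i => loc_ge2 (Hl i)).
have H0 : 1 <= R + S.
  by move: Hrs; rewrite /R /S; case: (inl (o2 0) \in D); case: (inl (o2 1) \in D).
have H1 : R + S = 1 by lia.
have Heq := @sum_eq2 k _ (fun i => loc_ge2 (Hl i)).
have Hsm : sm <= 2 * k by lia.
have {}Heq := Heq Hsm.
rewrite /R /S {R S} in Hrs HC Hl H0 H1 *.
rewrite /decodeG; apply/setP => -[p|[i j]]; rewrite inE /=.
  case: (ord2_cases p) => -> /=; move: H1; case: (inl (o2 0) \in D); case: (inl (o2 1) \in D) => //.
case HS: (inl (o2 1) \in D); rewrite HS in Hl; rewrite ffunE /= inordK ?code5_lt ?code3_lt //.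
  have [E0 E1 E2 E3 E4] := loc5 (Hl i) (Heq i).
  by case: (ord5_cases j) => [->|[->|[->|[->|->]]]].
have [E0 E1 E2 E3 E4] := loc3 (Hl i) (Heq i).
by case: (ord5_cases j) => [->|[->|[->|[->|->]]]].
Qed.

Lemma mainG k : domination_number (G_edge k) = 2 * k + 1 /\
  num_min_dominating (G_edge k) = 5 ^ k + 3 ^ k.
Proof.
have Hdn : domination_number (G_edge k) = 2 * k + 1.
  have /andP[H1 /eqP H2] := buildG_ok (inl [ffun => o5 0] : _ + {ffun 'I_k -> 'I_3}).
  exact: dn_eq H1 H2 (@lowG k).
split=> //; rewrite (nmd_eq Hdn).
have -> : [set D | dominating (G_edge k) D & #|D| == 2 * k + 1] = (@buildG k) @: setT.
  apply/setP => D; rewrite inE; apply/andP/imsetP => [[HD /eqP HC]|[t _ ->]].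
    by exists (decodeG D); rewrite ?inE ?build_decodeG.
  by apply/andP; exact: buildG_ok.
rewrite card_imset; last exact: can_inj (@decodeG_build k).
by rewrite cardsT card_sum !card_ffun !card_ord.
Qed.

Lemma mem_s_mapH k (q : HV k) :
  (q \in [seq (inl (inr (i, o5 0)) : HV k) | i <- enum 'I_k]) =
  match q with inl (inr (_, j)) => val j == 0 | _ => false end.
Proof.
case: q => [[q|[i j]]|q]. 1,3: by apply/mapP => -[].
apply/mapP/idP => [[x _ [_ ->]]|/eqP Hj] //.
exists i; first by rewrite mem_enum.
by congr (inl (inr (_, _))); apply: val_inj.
Qed.

Definition nbrsH k (x : HV k) : seq (HV k) :=
  match x with
  | inl (inl p) => if val p == 0 then [:: inl (inl (o2 1))]
             else inl (inl (o2 0)) :: inr (o3 2) :: [seq inl (inr (i, o5 0)) | i <- enum 'I_k]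
  | inl (inr (i, j)) => match val j with
     | 0 => [:: inl (inl (o2 1)); inl (inr (i, o5 1))]
     | 1 => [:: inl (inr (i, o5 0)); inl (inr (i, o5 2))]
     | 2 => [:: inl (inr (i, o5 1)); inl (inr (i, o5 3))]
     | 3 => [:: inl (inr (i, o5 2)); inl (inr (i, o5 4))]
     | _ => [:: inl (inr (i, o5 3))] end
  | inr q => match val q with
     | 0 => [:: inr (o3 1)]
     | 1 => [:: inr (o3 0); inr (o3 2)]
     | _ => [:: inr (o3 1); inl (inl (o2 1))] end
  end.

Lemma nbrsH_spec k (x y : HV k) : H_edge k x y = (y \in nbrsH x).
Proof.
case: x => [[[[|[|p]] Hp]|[i [[|[|[|[|[|j]]]]] Hj]]]|[[|[|[|p]]] Hp]] //;
case: y => [[[[|[|q]] Hq]|[i' [[|[|[|[|[|j']]]]] Hj']]]|[[|[|[|q]]] Hq]] //=.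
all: rewrite /H_edge /sym_rel /= ?inE ?mem_s_mapH //=.
all: rewrite ?inr_eq ?inl_eq ?inlr_eq ?inrl_eq ?xpair_eqE ?ordE /= ?andbT ?andbF ?orbF //.
all: rewrite ?inr_eq ?inl_eq ?inlr_eq ?inrl_eq ?xpair_eqE ?ordE /= ?andbT ?andbF ?orbF //.
all: by rewrite eq_sym.

Qed.

Lemma domH k (D : {set HV k}) : dominating (H_edge k) D =
  [&& (inl (inl (o2 0)) \in D) || (inl (inl (o2 1)) \in D),
      (inl (inl (o2 1)) \in D) || (inl (inl (o2 0)) \in D) || (inr (o3 2) \in D)
        || [exists i, inl (inr (i, o5 0)) \in D],
      [forall i, locG5 (inl (inl (o2 1)) \in D) (inl (inr (i, o5 0)) \in D)
          (inl (inr (i, o5 1)) \in D) (inl (inr (i, o5 2)) \in D)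
          (inl (inr (i, o5 3)) \in D) (inl (inr (i, o5 4)) \in D)],
      (inr (o3 0) \in D) || (inr (o3 1) \in D),
      (inr (o3 1) \in D) || (inr (o3 0) \in D) || (inr (o3 2) \in D) &
      (inr (o3 2) \in D) || (inr (o3 1) \in D) || (inl (inl (o2 1)) \in D)].
Proof.
rewrite (dom_nbrs (@nbrsH_spec k)) forall_sum forall_sum forall_I2 forall_pair forall_I3 /=.
rewrite has_map has_enum !orbF -!andbA !orbA.
congr [&& _, _, _, _, _ & _].
apply: eq_forallb => i; rewrite forall_I5 /= /locG5 !orbF.
by case: (inl (inl (o2 1)) \in D); case: (inl (inr (i, o5 0)) \in D);
  case: (inl (inr (i, o5 1)) \in D); case: (inl (inr (i, o5 2)) \in D);
  case: (inl (inr (i, o5 3)) \in D); case: (inl (inr (i, o5 4)) \in D).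
Qed.

Lemma cardH k (D : {set HV k}) : #|D| = (inl (inl (o2 0)) \in D) + (inl (inl (o2 1)) \in D) +
  \sum_(i < k) ((inl (inr (i, o5 0)) \in D) + (inl (inr (i, o5 1)) \in D)
      + (inl (inr (i, o5 2)) \in D) + (inl (inr (i, o5 3)) \in D) + (inl (inr (i, o5 4)) \in D))
  + ((inr (o3 0) \in D) + (inr (o3 1) \in D) + (inr (o3 2) \in D)).
Proof.
rewrite card_sumb big_sumType big_sumType /= sum2 sum3 sum_pairb; congr (_ + _ + _).
by apply: eq_bigr => i _; rewrite sum5.
Qed.

Definition buildH k (t : ('I_2 * {ffun 'I_k -> 'I_5}) + {ffun 'I_k -> 'I_3}) : {set HV k} :=
  [set x : HV k | match x with
   | inl (inl p) => val p == (if t is inl _ then 1 else 0)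
   | inl (inr (i, j)) => match t with inl (_, f) => pat5n (f i) (val j)
                         | inr g => pat3n (g i) (val j) end
   | inr q => match t with inl (c, _) => val q == val c | inr _ => val q == 1 end end].

Definition decodeH k (D : {set HV k}) : ('I_2 * {ffun 'I_k -> 'I_5}) + {ffun 'I_k -> 'I_3} :=
  if inl (inl (o2 1)) \in D then
    inl (if inr (o3 0) \in D then o2 0 else o2 1,
      [ffun i => inord (code5n (inl (inr (i, o5 0)) \in D) (inl (inr (i, o5 1)) \in D)
        (inl (inr (i, o5 2)) \in D) (inl (inr (i, o5 3)) \in D) (inl (inr (i, o5 4)) \in D))])
  else inr [ffun i => inord (code3n (inl (inr (i, o5 0)) \in D) (inl (inr (i, o5 1)) \in D)
        (inl (inr (i, o5 2)) \in D) (inl (inr (i, o5 3)) \in D) (inl (inr (i, o5 4)) \in D))].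

Lemma decodeH_build k : cancel (@buildH k) (@decodeH k).
Proof.
case=> [[c f]|f]; rewrite /decodeH !inE /=.
  congr (inl (_, _)).
    by case: (ord2_cases c) => ->.
  apply/ffunP => i; rewrite ffunE !inE /=.
  by case/andP: (pat5_ok (ltn_ord (f i))) => _ /eqP ->; rewrite inord_val.
congr inr; apply/ffunP => i; rewrite ffunE !inE /=.
by case/andP: (pat3_ok (ltn_ord (f i))) => _ /eqP ->; rewrite inord_val.
Qed.

Lemma buildH_ok k t : dominating (H_edge k) (buildH t) && (#|buildH t| == 2 * k + 2).
Proof.
rewrite domH cardH !inE /=.
case: t => [[c f]|f] /=.
  have Hc : [&& (0 == c) || (1 == c), (1 == c) || (0 == c) || (2 == c) & (2 == c) || (1 == c) || true]
    && ((0 == c) + (1 == c) + (2 == c) == 1) by case: (ord2_cases c) => ->.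
  case/andP: Hc => Hc1 /eqP Hc2.
  rewrite Hc1 andbT; apply/andP; split.
  - by apply/forallP => i; rewrite !inE /=; case/andP: (pat5_ok (ltn_ord (f i))) => /andP[].
  - rewrite (eq_bigr (fun _ => 2)); first by rewrite sum_nat_const card_ord Hc2; apply/eqP; lia.
    by move=> i _; rewrite !inE /=; case/andP: (pat5_ok (ltn_ord (f i))) => /andP[_ /eqP].
rewrite andbT; apply/andP; split.
- by apply/forallP => i; rewrite !inE /=; case/andP: (pat3_ok (ltn_ord (f i))) => /andP[].
- rewrite (eq_bigr (fun _ => 2)); first by rewrite sum_nat_const card_ord; apply/eqP; lia.
  by move=> i _; rewrite !inE /=; case/andP: (pat3_ok (ltn_ord (f i))) => /andP[_ /eqP].
Qed.

Lemma lowH k (D : {set HV k}) : dominating (H_edge k) D -> 2 * k + 2 <= #|D|.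
Proof.
rewrite domH cardH => /and3P[Hrs _ /and4P[/forallP Hl Hc _ _]].
have H1 := @sum_ge2 k _ (fun i => loc_ge2 (Hl i)).
have H2 : 1 <= (inl (inl (o2 0)) \in D) + (inl (inl (o2 1)) \in D).
  by move: Hrs; case: (inl (inl (o2 0)) \in D); case: (inl (inl (o2 1)) \in D).
have H3 : 1 <= (inr (o3 0) \in D) + (inr (o3 1) \in D) + (inr (o3 2) \in D).
  by move: Hc; case: (inr (o3 0) \in D); case: (inr (o3 1) \in D); case: (inr (o3 2) \in D).
move: H1; set sm := \sum_(i < k) _ => H1.
lia.
Qed.

Lemma build_decodeH k (D : {set HV k}) : dominating (H_edge k) D -> #|D| = 2 * k + 2 ->
  buildH (decodeH D) = D.
Proof.
move=> HD HC; move: (HD) HC; rewrite domH cardH => /and3P[Hrs _ /and4P[/forallP Hl Hc Hv Hw]] HC.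
move: HC; set sm := \sum_(i < k) _ => HC.
have Hs2 : 2 * k <= sm := @sum_ge2 k _ (fun i => loc_ge2 (Hl i)).
have H2 : 1 <= (inl (inl (o2 0)) \in D) + (inl (inl (o2 1)) \in D).
  by move: Hrs; case: (inl (inl (o2 0)) \in D); case: (inl (inl (o2 1)) \in D).
have H3 : 1 <= (inr (o3 0) \in D) + (inr (o3 1) \in D).
  by move: Hc; case: (inr (o3 0) \in D); case: (inr (o3 1) \in D).
have Hsm : sm <= 2 * k by lia.
have Heq := @sum_eq2 k _ (fun i => loc_ge2 (Hl i)) Hsm.
have E1 : (inl (inl (o2 0)) \in D) + (inl (inl (o2 1)) \in D) = 1 by lia.
have E2 : (inr (o3 0) \in D) + (inr (o3 1) \in D) + (inr (o3 2) \in D) = 1 by lia.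
rewrite /decodeH; apply/setP => -[[p|[i j]]|q]; rewrite inE /=.
- case: (ord2_cases p) => -> /=; move: E1;
   case: (inl (inl (o2 0)) \in D); case: (inl (inl (o2 1)) \in D) => //.
- case HS: (inl (inl (o2 1)) \in D); rewrite HS in Hl; rewrite ffunE /= inordK ?code5_lt ?code3_lt //.
    have [E0' E1' E2' E3' E4'] := loc5 (Hl i) (Heq i).
    by case: (ord5_cases j) => [->|[->|[->|[->|->]]]].
  have [E0' E1' E2' E3' E4'] := loc3 (Hl i) (Heq i).
  by case: (ord5_cases j) => [->|[->|[->|[->|->]]]].
- case: (ord3_cases q) => -> /=; move: E2 Hc Hw;
   case: (inl (inl (o2 1)) \in D); case: (inr (o3 0) \in D); case: (inr (o3 1) \in D);
   case: (inr (o3 2) \in D) => //.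
Qed.

Lemma mainH k : domination_number (H_edge k) = 2 * k + 2 /\
  num_min_dominating (H_edge k) = 2 * 5 ^ k + 3 ^ k.
Proof.
have Hdn : domination_number (H_edge k) = 2 * k + 2.
  have /andP[H1 /eqP H2] :=
    buildH_ok (inl (o2 0, [ffun => o5 0]) : _ + {ffun 'I_k -> 'I_3}).
  exact: dn_eq H1 H2 (@lowH k).
split=> //; rewrite (nmd_eq Hdn).
have -> : [set D | dominating (H_edge k) D & #|D| == 2 * k + 2] = (@buildH k) @: setT.
  apply/setP => D; rewrite inE; apply/andP/imsetP => [[HD /eqP HC]|[t _ ->]].
    by exists (decodeH D); rewrite ?inE ?build_decodeH.
  by apply/andP; exact: buildH_ok.
rewrite card_imset; last exact: can_inj (@decodeH_build k).
by rewrite cardsT card_sum card_prod !card_ffun !card_ord.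
Qed.

Theorem mainTheorem4 (k : nat) :
  [/\ domination_number (G_edge k) = 2 * k + 1,
      num_min_dominating (G_edge k) = 5 ^ k + 3 ^ k,
      domination_number (H_edge k) = 2 * k + 2
    & num_min_dominating (H_edge k) = 2 * 5 ^ k + 3 ^ k].
Proof.
by have [? ?] := mainG k; have [? ?] := mainH k; split.
Qed.
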